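(* (1) Every combinatorial $k$-parameter $\mathbf x=(k,S,\Lambda)$ is $\aleph_{k+1}$-free. (2) If $\mathbf x=(k,S,\Lambda,\mathbf a)$ is an abelian group $k$-parameter such that the combinatorial parameter $(k,S,\Lambda)$ is free, then $G_{\mathbf x}$ is a free abelian group.
   Context: For a set $S$, ${}^\omega S$ is the set of all functions $\omega\to S$. A combinatorial $k$-parameter is a triple $(k,S,\Lambda)$ with $k<\omega$, $S$ a set and $\Lambda\subseteq {}^{k+1}({}^\omega S)$ (sequences $\bar\eta=\langle\eta_0,\dots,\eta_k\rangle$, $\eta_\ell\in{}^\omega S$). An abelian group $k$-parameter is $\mathbf x=(k,S,\Lambda,\mathbf a)$ with $(k,S,\Lambda)$ a combinatorial $k$-parameter and $\mathbf a:\Lambda\times\omega\to\mathbb Z$, $\mathbf a_{\bar\eta,n}=\mathbf a(\bar\eta,n)$. For $\bar\eta\in\Lambda$, $m\le k$, $n<\omega$, $\bar\eta\upharpoonleft\langle m,n\rangle$ is the sequence obtained from $\bar\eta$ by replacing $\eta_m$ with $\eta_m\restriction n$. $\Lambda_m=\{\bar\eta\upharpoonleft\langle m,n\rangle:\bar\eta\in\Lambda,n<\omega\}$, $\Lambda_{\le k}=\bigcup_{m\le k}\Lambda_m$. $G_{\mathbf x}$ is the abelian group generated by $z$, $x_{\bar\nu}$ ($\bar\nu\in\Lambda_{\le k}$), $y_{\bar\eta,n}$ ($\bar\eta\in\Lambda,n<\omega$) freely except for the relations $(n!)y_{\bar\eta,n+1}=y_{\bar\eta,n}+\mathbf a_{\bar\eta,n}z+\sum_{m\le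 k}x_{\bar\eta\upharpoonleft\langle m,n\rangle}$ ($\bar\eta\in\Lambda$, $n<\omega$). A combinatorial $k$-parameter $(k,S,\Lambda)$ is free if there is an enumeration $\langle\bar\eta^\alpha:\alpha<\alpha( * )\rangle$ of $\Lambda$ such that for every $\alpha<\alpha( * )$ there are $m\le k$ and $n<\omega$ with $\bar\eta^\alpha\upharpoonleft\langle m,n\rangle\notin\{\bar\eta^\beta\upharpoonleft\langle m,n\rangle:\beta<\alpha\}$. It is $\theta$-free if $(k,S,\Lambda')$ is free for every $\Lambda'\subseteq\Lambda$ with $|\Lambda'|<\theta$. *)

(* Defs.v *)
From HB Require Import structures.
From mathcomp Require Import all_boot all_order all_algebra.
From Stdlib Require Import ClassicalEpsilon.
Set Implicit Arguments.
Unset Strict Implicit.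
Unset Printing Implicit Defensive.
Import GRing.Theory Num.Theory.

Definition cdec (P : Prop) : bool :=
  if excluded_middle_informative P then true else false.

Definition ind (P : Prop) : int := if cdec P then 1%R else 0%R.

Definition ktuple (S : Type) (k : nat) := 'I_k.+1 -> (nat -> S).

(* a sequence in which the coordinates are finite or infinite sequences:
   elements of Lambda_{<= k} live here *)
Definition pktuple (S : Type) (k : nat) := 'I_k.+1 -> (seq S + (nat -> S)).

Definition restr (S : Type) (k : nat) (eta : ktuple S k) (m : 'I_k.+1) (n : nat)
  : pktuple S k :=
  fun l => if l == m then inl (mkseq (eta m) n) else inr (eta l).

Definition is_wellorder (T : Type) (X : T -> Prop) (lt : T -> T -> Prop) : Prop :=
  (forall x, X x -> ~ lt x x) /\
  (forall x y z, X x -> X y -> X z -> lt x y -> lt y z -> lt x z) /\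
  (forall x y, X x -> X y -> x = y \/ lt x y \/ lt y x) /\
  well_founded (fun x y => X x /\ X y /\ lt x y).

(* (k,S,Lam) is free: there is an enumeration <eta^alpha : alpha < alpha(star)>
   of Lam, i.e. a well-ordering of Lam, such that every eta^alpha has some
   restriction eta^alpha |` <m,n> not among the eta^beta |` <m,n>, beta < alpha. *)
Definition comb_free (S : Type) (k : nat) (Lam : ktuple S k -> Prop) : Prop :=
  exists lt : ktuple S k -> ktuple S k -> Prop,
    is_wellorder Lam lt /\
    forall eta, Lam eta ->
      exists (m : 'I_k.+1) (n : nat),
        forall beta, Lam beta -> lt beta eta -> restr beta m n <> restr eta m n.

Fixpoint card_le_aleph (T : Type) (j : nat) (X : T -> Prop) : Prop :=
  match j with
  | 0 => exists f : T -> nat, forall x y, X x -> X y -> f x = f y -> x = y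
  | j'.+1 => exists lt : T -> T -> Prop, is_wellorder X lt /\
              forall x, X x -> card_le_aleph j' (fun y => X y /\ lt y x)
  end.

Definition card_lt_aleph (T : Type) (j : nat) (X : T -> Prop) : Prop :=
  match j with
  | 0 => exists s : seq T, forall x, X x -> List.In x s
  | j'.+1 => card_le_aleph j' X
  end.

Definition aleph_free (S : Type) (k : nat) (j : nat) (Lam : ktuple S k -> Prop) : Prop :=
  forall Lam' : ktuple S k -> Prop,
    (forall eta, Lam' eta -> Lam eta) -> card_lt_aleph j Lam' -> comb_free Lam'.

Inductive gen (S : Type) (k : nat) : Type :=
  | Gz : gen S k
  | Gx : pktuple S k -> gen S k
  | Gy : ktuple S k -> nat -> gen S k.
Arguments Gz {S k}.

Definition valid_gen (S : Type) (k : nat) (Lam : ktuple S k -> Prop) (g : gen S k) : Prop :=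
  match g with
  | Gz => True
  | Gx nu => exists eta m n, Lam eta /\ nu = restr eta m n
  | Gy eta _ => Lam eta
  end.

(* elements of the free abelian group F on the valid generators:
   finitely supported integer-valued functions on them *)
Definition elemF (S : Type) (k : nat) (Lam : ktuple S k -> Prop) (f : gen S k -> int) : Prop :=
  (exists s : seq (gen S k), forall g, f g <> 0%R -> List.In g s) /\
  (forall g, f g <> 0%R -> valid_gen Lam g).

Definition relator (S : Type) (k : nat) (a : ktuple S k -> nat -> int)
  (eta : ktuple S k) (n : nat) : gen S k -> int :=
  fun g => (((n`!)%:Z * ind (g = Gy eta n.+1) - ind (g = Gy eta n)
            - a eta n * ind (g = Gz))
            - \sum_(m < k.+1) ind (g = Gx (restr eta m n)))%R.

Definition inN (S : Type) (k : nat) (Lam : ktuple S k -> Prop) (a : ktuple S k -> nat -> int)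
  (f : gen S k -> int) : Prop :=
  exists l : seq (int * ({eta : ktuple S k | Lam eta} * nat)),
    f = fun g => (\sum_(p <- l) p.1 * relator a (proj1_sig p.2.1) p.2.2 g)%R.

Definition comb (S : Type) (k : nat) (I : Type) (b : I -> gen S k -> int)
  (l : seq (int * I)) : gen S k -> int :=
  fun g => (\sum_(p <- l) p.1 * b p.2 g)%R.

(* G_x = F / N is a free abelian group: there is a family (b_i)_{i in I} in F
   whose classes form a basis of F/N, i.e. they generate F/N and any integer
   combination of them lying in N has all (aggregated) coefficients zero. *)
Definition Gx_free (S : Type) (k : nat) (Lam : ktuple S k -> Prop)
  (a : ktuple S k -> nat -> int) : Prop :=
  exists (I : Type) (b : I -> gen S k -> int),
    (forall i, elemF Lam (b i)) /\
    (forall f, elemF Lam f ->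
        exists l : seq (int * I), inN Lam a (fun g => (f g - comb b l g)%R)) /\
    (forall l : seq (int * I), inN Lam a (comb b l) ->
        forall i, (\sum_(p <- l) p.1 * ind (p.2 = i))%R = 0%R).

(* Main.v *)
Require Import Defs.
From mathcomp Require Import all_boot all_order all_algebra zify.
From Stdlib Require Import ClassicalEpsilon FunctionalExtensionality Classical.
Set Implicit Arguments.
Unset Strict Implicit.
Unset Printing Implicit Defensive.

Section WO.
Variable T : Type.

Lemma wo_sub (X Y : T -> Prop) lt : is_wellorder X lt -> (forall x, Y x -> X x) -> is_wellorder Y lt.
Proof.
move=> [irr [tr [tri wf]]] YX; split; [|split; [|split]].
- by move=> x /YX; apply: irr.
- by move=> x y z /YX Hx /YX Hy /YX Hz; apply: tr.
- by move=> x y /YX Hx /YX Hy; apply: tri.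
- move=> x; elim: (wf x) => {}x _ IH; constructor => y [Yy [Yx lyx]]; apply: IH.
  by split; [apply: YX|split; [apply: YX|]].
Qed.

Lemma wo_ext (X : T -> Prop) (r1 r2 : T -> T -> Prop) :
  (forall a b, X a -> X b -> (r1 a b <-> r2 a b)) -> is_wellorder X r1 -> is_wellorder X r2.
Proof.
move=> E [irr [tr [tri wf]]]; split; [|split; [|split]].
- by move=> x Xx /(E _ _ Xx Xx); apply: irr.
- move=> x y z Xx Xy Xz /(E _ _ Xx Xy) H1 /(E _ _ Xy Xz) H2; apply/(E _ _ Xx Xz).
  exact: tr H1 H2.
- move=> x y Xx Xy; case: (tri x y Xx Xy) => [->|[H|H]]; first by left.
  + by right; left; apply/(E _ _ Xx Xy).
  + by right; right; apply/(E _ _ Xy Xx).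
- move=> x; elim: (wf x) => {}x _ IH; constructor => y [Yy [Yx lyx]]; apply: IH.
  by split=> //; split=> //; apply/(E _ _ Yy Yx).
Qed.

Lemma wo_single (X : T -> Prop) (r : T -> T -> Prop) p :
  (forall x, X x -> x = p) -> (forall a b, X a -> X b -> ~ r a b) -> is_wellorder X r.
Proof.
move=> Hp Hr; split; [|split; [|split]].
- by move=> x Xx; apply: Hr.
- by move=> x y z Xx Xy Xz H; case: (Hr _ _ Xx Xy H).
- by move=> x y /Hp -> /Hp ->; left.
- move=> x; constructor => y [Xy [Xx H]]; by case: (Hr _ _ Xy Xx H).
Qed.

Lemma wo_empty (X : T -> Prop) (r : T -> T -> Prop) :
  (forall x, ~ X x) -> is_wellorder X r.
Proof.
move=> H; split; [|split; [|split]].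
- by move=> x /H.
- by move=> x y z /H.
- by move=> x y /H.
- by move=> x; constructor => y [/H].
Qed.

Lemma wo_nat_inj (X : T -> Prop) (h : T -> nat) :
  (forall a b, X a -> X b -> h a = h b -> a = b) ->
  is_wellorder X (fun a b => (h a < h b)%N).
Proof.
move=> inj; split; [|split; [|split]].
- by move=> x _; rewrite ltnn.
- by move=> x y z _ _ _; apply: ltn_trans.
- move=> x y Xx Xy; case: (ltngtP (h x) (h y)) => H; [by right; left|by right; right|].
  by left; apply: inj.
- suff H : forall n x, (h x < n)%N -> Acc (fun x y => X x /\ X y /\ (h x < h y)%N) x.
    by move=> x; apply: (H (h x).+1).
  elim=> [|n IH] x Hx; first by [].
  constructor => y [_ [_ Hy]]; apply: IH; exact: leq_trans Hy Hx.
Qed.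

Lemma wo_lex (K : Type) (X : T -> Prop) (kap : T -> K) (KX : K -> Prop)
  (R : K -> K -> Prop) (O : K -> T -> T -> Prop) :
  is_wellorder KX R -> (forall x, X x -> KX (kap x)) ->
  (forall c, is_wellorder (fun x => X x /\ kap x = c) (O c)) ->
  is_wellorder X (fun x y => R (kap x) (kap y) \/ (kap x = kap y /\ O (kap x) x y)).
Proof.
move=> [irr [tr [tri wf]]] HK HO; split; [|split; [|split]].
- move=> x Xx [H|[_ H]]; first exact: (irr _ (HK _ Xx) H).
  by case: (HO (kap x)) => irr' _; apply: (irr' x).
- move=> x y z Xx Xy Xz [H1|[E1 H1]] [H2|[E2 H2]].
  + by left; apply: (tr _ _ _ (HK _ Xx) (HK _ Xy) (HK _ Xz) H1 H2).
  + by left; rewrite -E2.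
  + by left; rewrite E1.
  + right; split; first by rewrite E1.
    have H2' : O (kap x) y z by rewrite E1.
    case: (HO (kap x)) => _ [tr' _]; apply: (tr' x y z _ _ _ H1 H2').
    - by split.
    - by split=> //; rewrite E1.
    - by split=> //; rewrite E1 E2.
- move=> x y Xx Xy; case: (tri _ _ (HK _ Xx) (HK _ Xy)) => [E|[H|H]].
  + case: (HO (kap x)) => _ [_ [tri' _]].
    have Fx : X x /\ kap x = kap x by [].
    have Fy : X y /\ kap y = kap x by split=> //; rewrite E.
    case: (tri' x y Fx Fy) => [->|[H|H]]; first by left.
    * by right; left; right.
    * by right; right; right; split=> //; rewrite -E.
  + by right; left; left.
  + by right; right; left.
- suff H : forall c, Acc (fun a b => KX a /\ KX b /\ R a b) c ->
      forall x, X x -> kap x = c ->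
      Acc (fun x y => X x /\ X y /\ (R (kap x) (kap y) \/ (kap x = kap y /\ O (kap x) x y))) x.
    move=> x; constructor => y [Xy _]; exact: (H _ (wf (kap y)) y Xy erefl).
  move=> c Ac; elim: Ac => {}c _ IHc x Xx Ex.
  case: (HO c) => _ [_ [_ wfO]].
  elim: (wfO x) Xx Ex => {}x _ IHx Xx Ex.
  constructor => y [Xy [_ [H|[E H]]]].
  + by apply: (IHc (kap y)) => //; rewrite -Ex; split; [apply: HK|split; [apply: HK|]].
  + apply: IHx => //; last by rewrite E.
    by split; [split=> //; rewrite E|split=> //; rewrite -Ex -E].
Qed.

Lemma list_max (X : T -> Prop) lt (U : Type) (f : U -> T) (s : list U) :
  is_wellorder X lt -> s <> nil -> (forall x, List.In x s -> X (f x)) ->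
  exists x, List.In x s /\ forall y, List.In y s -> f y = f x \/ lt (f y) (f x).
Proof.
move=> [irr [tr [tri _]]]; elim: s => [//|a s IH] _ HX.
case: s IH HX => [|b s] IH HX.
  by exists a; split; [left|move=> y [<-|[]]; left].
have [x [inx Mx]] : exists x, List.In x (b :: s) /\
   forall y, List.In y (b :: s) -> f y = f x \/ lt (f y) (f x).
  by apply: IH => // y Hy; apply: HX; right.
have Xa : X (f a) by apply: HX; left.
have Xx : X (f x) by apply: HX; right.
case: (tri _ _ Xa Xx) => [E|[H|H]].
- exists x; split; first by right.
  by move=> y [<-|Hy]; [left|apply: Mx].
- exists x; split; first by right.
  by move=> y [<-|Hy]; [right|apply: Mx].
- exists a; split; first by left.
  move=> y [<-|Hy]; first by left.
  right; case: (Mx y Hy) => [->//|H'].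
  apply: (tr _ _ _ _ Xx Xa H' H); apply: HX; by right.
Qed.

End WO.

Lemma card_mono j : forall T (X Y : T -> Prop), card_le_aleph j X ->
  (forall y, Y y -> X y) -> card_le_aleph j Y.
Proof.
elim: j => [|j IH] T X Y /=.
  by move=> [f Hf] YX; exists f => x y /YX Hx /YX Hy; apply: Hf.
move=> [lt [Hw Hs]] YX; exists lt; split; first exact: wo_sub Hw YX.
move=> x /YX Xx; apply: (IH _ _ _ (Hs x Xx)) => y [/YX ? ?]; by split.
Qed.

Lemma card_empty j : forall T (X : T -> Prop), (forall x, ~ X x) -> card_le_aleph j X.
Proof.
elim: j => [|j IH] T X H /=.
  by exists (fun _ => 0%N) => x y /H.
exists (fun _ _ => False); split; first exact: wo_empty.
by move=> x /H.
Qed.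

Lemma card_wo j T (X : T -> Prop) : card_le_aleph j X -> exists lt, is_wellorder X lt.
Proof.
case: j => [|j] /=; last by move=> [lt [H _]]; exists lt.
by move=> [f Hf]; exists (fun a b => (f a < f b)%N); apply: wo_nat_inj.
Qed.

Lemma cdecP (P : Prop) : cdec P = true <-> P.
Proof. by rewrite /cdec; case: excluded_middle_informative. Qed.
Lemma cdecT (P : Prop) : P -> cdec P = true.
Proof. by rewrite /cdec; case: excluded_middle_informative. Qed.
Lemma cdecF (P : Prop) : ~ P -> cdec P = false.
Proof. by rewrite /cdec; case: excluded_middle_informative. Qed.

Lemma card_add1 j : forall T (X : T -> Prop) p, card_le_aleph j X ->
  card_le_aleph j (fun z => X z \/ z = p).
Proof.
elim: j => [|j IH] T X p /=.
  move=> [f Hf]; exists (fun z => if cdec (z = p) then 0%N else (f z).+1).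
  move=> x y Hx Hy.
  case: (classic (x = p)) => [->|Nx]; case: (classic (y = p)) => [->|Ny] //;
    rewrite ?(cdecT (erefl p)) ?(cdecF Nx) ?(cdecF Ny) //.
  move=> [E]; apply: Hf => //; [by case: Hx|by case: Hy].
move=> [lt [Hw Hs]].
pose kap z := if cdec (z = p) then 0%N else 1%N.
exists (fun x y => (kap x < kap y)%N \/ (kap x = kap y /\ (kap x <> 0%N /\ lt x y))).
split.
  refine (@wo_lex _ nat _ kap (fun _ => True) (fun a b => (a < b)%N)
     (fun c x y => c <> 0%N /\ lt x y) _ _ _); first exact: (@wo_nat_inj nat _ id).
    by [].
  move=> c; case: (eqVneq c 0%N) => [->|Hc].
    apply: (@wo_single _ _ _ p); first by move=> x [_]; rewrite /kap /cdec; case: excluded_middle_informative.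
    by move=> a b _ _ [].
  apply: (@wo_ext _ _ lt); first by move=> a b _ _; split=> [H|[]//]; split=> //; apply/eqP.
  apply: (wo_sub Hw) => x [[//|Ex] E]; subst x.
  by rewrite /kap cdecT // in E; rewrite -E eqxx in Hc.
move=> z Hz; case: (classic (z = p)) => [Ez|Nz].
  have Kz : kap z = 0%N by rewrite /kap cdecT.
  apply: card_empty => y [_]; rewrite Kz.
  by case=> [//|[E [N _]]].
have Xz : X z by case: Hz.
have Kz : kap z = 1%N by rewrite /kap cdecF.
apply: (card_mono (IH _ _ p (Hs z Xz))) => y [Hy]; rewrite Kz.
case: (classic (y = p)) => [->|Ny]; first by right.
have Ky : kap y = 1%N by rewrite /kap cdecF.
rewrite Ky => -[//|[_ [_ H]]].
by left; split=> //; case: Hy.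
Qed.

Lemma div_uniq (a b c d N : nat) : (a*N+b = c*N+d -> b < N -> d < N -> a = c /\ b = d)%N.
Proof.
move=> E Hb Hd.
have Eb : b = d.
  by have := congr1 (modn^~ N) E; rewrite !modnMDl !modn_small.
subst; split=> //.
have N0 : (0 < N)%N by exact: leq_ltn_trans Hb.
by have := congr1 (divn^~ N) E; rewrite !divnMDl // divn_small // !addn0.
Qed.

Lemma card_img j : forall (A B : Type) (X : A -> Prop) (Y : B -> Prop) (g1 : B -> A)
  (g2 : B -> nat) (N : nat), card_le_aleph j X ->
  (forall y, Y y -> X (g1 y) /\ (g2 y < N)%N) ->
  (forall y y', Y y -> Y y' -> g1 y = g1 y' -> g2 y = g2 y' -> y = y') ->
  card_le_aleph j Y.
Proof.
elim: j => [|j IH] A B X Y g1 g2 N /=.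
  move=> [f Hf] HY Hi; exists (fun y => f (g1 y) * N + g2 y)%N => y y' Yy Yy' E.
  have [X1 L1] := HY _ Yy; have [X2 L2] := HY _ Yy'.
  have [E1 E2] := div_uniq E L1 L2.
  by apply: Hi => //; apply: Hf.
move=> [lt [Hw Hs]] HY Hi.
exists (fun x y => lt (g1 x) (g1 y) \/ (g1 x = g1 y /\ (g2 x < g2 y)%N)); split.
  apply: (@wo_lex B A Y g1 X lt (fun _ a b => (g2 a < g2 b)%N) Hw).
    by move=> y /HY [].
  move=> c; apply: wo_nat_inj => a b [Ya Ea] [Yb Eb] E; apply: Hi => //.
  by rewrite Ea Eb.
move=> y Yy; have [Xy _] := HY _ Yy.
apply: (IH A B (fun a => (X a /\ lt a (g1 y)) \/ a = g1 y) _ g1 g2 N).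
- exact: card_add1 (Hs _ Xy).
- move=> y' [Yy' H]; have [Xy' L] := HY _ Yy'; split=> //.
  by case: H => [H|[-> _]]; [left|right].
- by move=> a b [Ya _] [Yb _]; apply: Hi.
Qed.

Lemma In_mem (T : eqType) (x : T) (s : seq T) : List.In x s <-> x \in s.
Proof.
elim: s => [//|a s IH] /=; rewrite in_cons; split.
  by case=> [->|/IH ->]; rewrite ?eqxx ?orbT.
by case/orP=> [/eqP ->|/IH]; [left|right].
Qed.

Section Part1.
Variables (S : Type) (k : nat).

Lemma restr_at_m (eta : ktuple S k) m n : restr eta m n m = inl (mkseq (eta m) n).
Proof. by rewrite /restr eqxx. Qed.

Lemma restr_at_l (eta : ktuple S k) m n l : l != m -> restr eta m n l = inr (eta l).
Proof. by rewrite /restr => /negbTE ->. Qed.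

Lemma restr_neq_l (b e : ktuple S k) m n l : l != m -> b l <> e l ->
  restr b m n <> restr e m n.
Proof.
move=> Hl Hn E; apply: Hn; have := congr1 (fun f => f l) E.
by rewrite !restr_at_l //; case.
Qed.

Lemma restr_eq_seq (b e : ktuple S k) m n : restr b m n = restr e m n ->
  mkseq (b m) n = mkseq (e m) n.
Proof. by move=> E; have := congr1 (fun f => f m) E; rewrite !restr_at_m; case. Qed.

Lemma restr_eq_full (b e : ktuple S k) m n : restr b m n = restr e m n ->
  b m = e m -> b = e.
Proof.
move=> E Em; apply: functional_extensionality => l.
case: (eqVneq l m) => [->//|Hl].
by have := congr1 (fun f => f l) E; rewrite !restr_at_l //; case.
Qed.

Definition freeU (Lam : ktuple S k -> Prop) (u : {set 'I_k.+1}) :=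
  exists lt, is_wellorder Lam lt /\ forall eta, Lam eta ->
    exists m n, m \in u /\ forall beta, Lam beta -> lt beta eta -> restr beta m n <> restr eta m n.

Lemma main_claim j : forall (Lam : ktuple S k -> Prop) W (u : {set 'I_k.+1})
  (D : (nat -> S) -> Prop),
  is_wellorder Lam W -> (j < #|u|)%N -> card_le_aleph j D ->
  (forall eta, Lam eta -> forall l, l \in u -> D (eta l)) -> freeU Lam u.
Proof.
elim: j => [|j IH] Lam W u D HW Hu.
  move=> [f Hf] HD; case/card_gt0P: Hu => m Hm.
  pose sep (y : nat -> S) (i : nat) := epsilon (inhabits 0%N)
    (fun t => forall x, D x -> f x = i -> x <> y -> x t <> y t).
  have sepP : forall y i x, D x -> f x = i -> x <> y -> x (sep y i) <> y (sep y i).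
    move=> y i; apply: (epsilon_spec (inhabits 0%N)
      (fun t => forall x, D x -> f x = i -> x <> y -> x t <> y t)).
    case: (classic (exists x, D x /\ f x = i /\ x <> y)) => [[x0 [D0 [f0 N0]]]|NE].
      have [t Ht] : exists t, x0 t <> y t.
        apply: not_all_ex_not => H; apply: N0; exact: functional_extensionality.
      exists t => x Dx fx _; have -> // : x = x0 by apply: Hf => //; rewrite fx f0.
    by exists 0%N => x Dx fx Nx; case: NE; exists x.
  exists (fun b e => (f (b m) < f (e m))%N \/ (f (b m) = f (e m) /\ W b e)); split.
    refine (@wo_lex _ nat Lam (fun e => f (e m)) (fun _ => True) (fun a b => (a < b)%N)
      (fun _ => W) _ _ _); first exact: (@wo_nat_inj nat _ id).
      by [].
    by move=> c; apply: (wo_sub HW) => x [].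
  move=> e He.
  pose n0 := (\max_(i < f (e m)) (sep (e m) i).+1)%N.
  exists m; exists n0; split=> // b Hb /= [H|[E H]] Er.
    have Nb : b m <> e m by move=> E; rewrite E ltnn in H.
    have := sepP (e m) (f (b m)) (b m) (HD _ Hb _ Hm) erefl Nb.
    have Ht : (sep (e m) (f (b m)) < n0)%N.
      by have := @leq_bigmax _ (fun i : 'I_(f (e m)) => (sep (e m) i).+1) (Ordinal H).
    have := congr1 (nth (b m 0%N) ^~ (sep (e m) (f (b m)))) (restr_eq_seq Er).
    by rewrite !nth_mkseq.
  have Em : b m = e m by apply: Hf => //; apply: HD.
  have Ebe := restr_eq_full Er Em; subst b.
  by case: HW => irr _; apply: (irr e).
move=> [ltD [HwD HsD]] HD.
have Hu0 : (0 < #|u|)%N by apply: leq_ltn_trans Hu.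
have ex_lk : forall e, Lam e -> exists l0, [/\ l0 \in u,
    (forall l, l \in u -> e l = e l0 \/ ltD (e l) (e l0)) &
    (forall l, l \in u -> e l = e l0 -> (l0 <= l)%N)].
  move=> e He.
  have [l1 [In1 M1]] : exists x, List.In x (enum u) /\
      forall y, List.In y (enum u) -> e y = e x \/ ltD (e y) (e x).
    apply: (@list_max _ D ltD _ e (enum u) HwD).
    - case/card_gt0P: Hu0 => m Hm E.
      by have := mem_enum u m; rewrite Hm E.
    - by move=> x /In_mem; rewrite mem_enum => Hx; apply: HD.
  have Hl1 : l1 \in u by rewrite -mem_enum; apply/In_mem.
  pose P := fun i : 'I_k.+1 => (i \in u) && cdec (e i = e l1).
  have P1 : P l1 by rewrite /P Hl1 cdecT.
  case: (arg_minnP (fun i : 'I_k.+1 => i : nat) P1) => l0 /andP [Hl0 /cdecP E0] Min.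
  exists l0; split=> //.
    by move=> l Hl; rewrite E0; apply: M1; apply/In_mem; rewrite mem_enum.
  by move=> l Hl El; apply: Min; rewrite /P Hl cdecT // El.
pose lk e := epsilon (inhabits (@ord0 k)) (fun l0 => [/\ l0 \in u,
    (forall l, l \in u -> e l = e l0 \/ ltD (e l) (e l0)) &
    (forall l, l \in u -> e l = e l0 -> (l0 <= l)%N)]).
have lkP : forall e, Lam e -> [/\ lk e \in u,
    (forall l, l \in u -> e l = e (lk e) \/ ltD (e l) (e (lk e))) &
    (forall l, l \in u -> e l = e (lk e) -> (lk e <= l)%N)].
  move=> e He; apply: (epsilon_spec (inhabits (@ord0 k)) (fun l0 => [/\ l0 \in u,
    (forall l, l \in u -> e l = e l0 \/ ltD (e l) (e l0)) &
    (forall l, l \in u -> e l = e l0 -> (l0 <= l)%N)])); exact: ex_lk.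
pose gam e := e (lk e).
have Dgam : forall e, Lam e -> D (gam e).
  move=> x Hx; rewrite /gam; case: (lkP x Hx) => H _ _; exact: HD.
pose SB c l := fun e => (Lam e /\ gam e = c) /\ lk e = l.
pose good c l lt := is_wellorder (SB c l) lt /\ forall e, SB c l e ->
    exists m n, m \in u :\ l /\ forall b, SB c l b -> lt b e -> restr b m n <> restr e m n.
have ex_good : forall c l, exists lt, good c l lt.
  move=> c l; case: (classic (exists e0, SB c l e0)) => [[e0 [[He0 Ec] El]]|NE].
    have Dc : D c by rewrite -Ec; apply: Dgam.
    have Hl : l \in u by rewrite -El; case: (lkP e0 He0).
    apply: (IH _ W _ (fun x => (D x /\ ltD x c) \/ x = c)).
    - by apply: (wo_sub HW) => x [[]].
    - by move: Hu; rewrite (cardsD1 l u) Hl.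
    - exact: card_add1 (HsD c Dc).
    - move=> e [[He Ec'] El'] l' /setD1P [_ Hl'].
      case: (lkP e He) => _ M _; case: (M l' Hl') => [E|H].
        by right; rewrite E -Ec'.
      by left; split; [apply: HD|rewrite -Ec'].
  exists (fun _ _ => False); split; first by apply: wo_empty => x H; apply: NE; exists x.
  by move=> e H; case: NE; exists e.
pose ord c l := epsilon (inhabits (fun _ _ : ktuple S k => False)) (good c l).
have ordP : forall c l, good c l (ord c l).
  by move=> c l; apply: (epsilon_spec (inhabits (fun _ _ : ktuple S k => False)) (good c l)).
pose Inner c := fun x y => (lk y < lk x)%N \/ (lk x = lk y /\ ord c (lk x) x y).
exists (fun x y => ltD (gam x) (gam y) \/ (gam x = gam y /\ Inner (gam x) x y)); split.
  apply: (@wo_lex _ _ Lam gam D ltD Inner HwD Dgam) => c.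
  apply: (@wo_lex _ 'I_k.+1 _ lk (fun _ => True) (fun a b => (b < a)%N)
     (fun l => ord c l)).
  - apply: (@wo_ext _ _ (fun a b : 'I_k.+1 => (k - a < k - b)%N)).
      by move=> a b _ _; have := ltn_ord a; have := ltn_ord b; split; lia.
    apply: wo_nat_inj => a b _ _ E; apply: val_inj => /=.
    by move: E; have := ltn_ord a; have := ltn_ord b; lia.
  - by [].
  - by move=> l; case: (ordP c l).
move=> e He.
case: (ordP (gam e) (lk e)) => _ /(_ e) [//|m [n [/setD1P [Hml Hmu] Hmn]]].
exists m, n; split=> // b Hb /= [H|[E [H|[El H]]]].
- apply: (restr_neq_l (l := lk e)); first by rewrite eq_sym.
  move=> Eb; have [Hlu _ _] := lkP e He.
  case: (lkP b Hb) => _ M _; case: (M _ Hlu) => [E'|H'].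
    rewrite Eb in E'; case: HwD => irr _; apply: (irr (gam b) (Dgam _ Hb)).
    by move: H; rewrite /gam -E'.
  rewrite Eb in H'; case: HwD => irr [tr _]; apply: (irr (gam b) (Dgam _ Hb)).
  exact: (tr _ _ _ (Dgam _ Hb) (Dgam _ He) (Dgam _ Hb) H H').
- apply: (restr_neq_l (l := lk e)); first by rewrite eq_sym.
  move=> Eb; have [Hlu _ _] := lkP e He.
  case: (lkP b Hb) => _ _ Mn.
  have := Mn _ Hlu; rewrite Eb -/(gam e) -E => /(_ erefl).
  by rewrite leqNgt H.
- apply: Hmn => //; last by rewrite -E -El.
Qed.

End Part1.

Lemma part1 : forall (k : nat) (Sy : Type) (Lam : ktuple Sy k -> Prop), aleph_free k.+1 Lam.
Proof.
move=> k S Lam Lam' _ /= Hc.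
have [W HW] := card_wo Hc.
pose D x := exists e, Lam' e /\ exists l, e l = x.
have HcD : card_le_aleph k D.
  pose P x := fun p : ktuple S k * 'I_k.+1 => Lam' p.1 /\ p.1 p.2 = x.
  pose pick x := epsilon (inhabits ((fun _ => x) : ktuple S k, @ord0 k)) (P x).
  have pickP : forall x, D x -> Lam' (pick x).1 /\ (pick x).1 (pick x).2 = x.
    move=> x [e [He [l El]]].
    apply: (epsilon_spec (inhabits ((fun _ => x) : ktuple S k, @ord0 k)) (P x)).
    by exists (e, l).
  apply: (@card_img k _ _ _ D (fun x => (pick x).1) (fun x => val (pick x).2) k.+1 Hc).
  - by move=> y Dy; split; [case: (pickP y Dy)|exact: ltn_ord].
  - move=> y y' Dy Dy' E1 E2.
    have E2' : (pick y).2 = (pick y').2 by apply: val_inj.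
    case: (pickP y Dy) => _ <-; case: (pickP y' Dy') => _ <-.
    by rewrite E1 E2'.
have Hu : (k < #|[set: 'I_k.+1]|)%N by rewrite cardsT card_ord.
have [lt [Hw Hf]] := @main_claim S k k Lam' W _ D HW Hu HcD
  (fun e He l _ => ex_intro _ e (conj He (ex_intro _ l erefl))).
exists lt; split=> // e He; have [m [n [_ H]]] := Hf e He.
by exists m, n.
Qed.
Import GRing.Theory Num.Theory.

Lemma indT (P : Prop) : P -> ind P = 1%R.
Proof. by move=> H; rewrite /ind cdecT. Qed.
Lemma indF (P : Prop) : ~ P -> ind P = 0%R.
Proof. by move=> H; rewrite /ind cdecF. Qed.
Lemma ind_iff (P Q : Prop) : (P <-> Q) -> ind P = ind Q.
Proof.
move=> E; case: (classic P) => HP; first by rewrite !indT //; apply/E.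
by rewrite !indF // => /E.
Qed.

Section Part2.
Variables (S : Type) (k : nat) (Lam : ktuple S k -> Prop) (a : ktuple S k -> nat -> int)
  (lt : ktuple S k -> ktuple S k -> Prop).
Hypothesis HW : is_wellorder Lam lt.
Hypothesis Hwit : forall eta, Lam eta -> exists m n, forall beta, Lam beta -> lt beta eta ->
  restr beta m n <> restr eta m n.

Local Open Scope ring_scope.

Definition witP eta (p : 'I_k.+1 * nat) :=
  forall beta, Lam beta -> lt beta eta -> restr beta p.1 p.2 <> restr eta p.1 p.2.
Definition wit eta := epsilon (inhabits (@ord0 k, 0%N)) (witP eta).
Definition mw eta := (wit eta).1.
Definition nw eta := (wit eta).2.

Lemma witE eta : Lam eta -> witP eta (wit eta).
Proof.
move=> He; apply: (epsilon_spec (inhabits (@ord0 k, 0%N)) (witP eta)).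
by have [m [n H]] := Hwit He; exists (m, n).
Qed.

Definition elim_ (nu : pktuple S k) :=
  exists g, Lam g /\ exists n', (nw g <= n')%N /\ nu = restr g (mw g) n'.

Definition basic (x : gen S k) : Prop :=
  match x with
  | Gz => True
  | Gx nu => valid_gen Lam (Gx nu) /\ ~ elim_ nu
  | Gy eta n => Lam eta /\ (nw eta <= n)%N
  end.

Lemma R1 (b e : ktuple S k) m n m' n' : restr b m n = restr e m' n' -> m = m' /\ n = n'.
Proof.
move=> E; have := congr1 (fun f => f m) E; rewrite restr_at_m.
case: (eqVneq m m') => [<-|Hm]; last by rewrite restr_at_l.
rewrite restr_at_m => -[E']; split=> //.
by have := congr1 size E'; rewrite !size_mkseq.
Qed.

Lemma R2 (b e : ktuple S k) m n n' : restr b m n' = restr e m n' -> (n <= n')%N ->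
  restr b m n = restr e m n.
Proof.
move=> E Hn; apply: functional_extensionality => l.
case: (eqVneq l m) => [->|Hl]; last first.
  by have := congr1 (fun f => f l) E; rewrite !restr_at_l.
rewrite !restr_at_m; congr inl.
have E' := restr_eq_seq E.
apply: (@eq_from_nth _ (b m 0%N)); first by rewrite !size_mkseq.
move=> i; rewrite size_mkseq => Hi; rewrite !nth_mkseq //.
have Hi' : (i < n')%N by exact: leq_trans Hi Hn.
by have := congr1 (nth (b m 0%N) ^~ i) E'; rewrite !nth_mkseq.
Qed.

Lemma elim_le e g m n n'' : Lam e -> Lam g -> (nw g <= n'')%N ->
  restr e m n = restr g (mw g) n'' -> g = e \/ lt g e.
Proof.
move=> He Hg Hn E; have [Em En] := R1 E; subst.
case: HW => _ [_ [tri _]]; case: (tri g e Hg He) => [->|[H|H]]; [by left|by right|].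
by case: (witE Hg He H (R2 E Hn)).
Qed.

Definition I := {x : gen S k | basic x}.
Definition ee (x : gen S k) : gen S k -> int := fun y => ind (y = x).
Definition bas (i : I) := ee (proj1_sig i).

Definition rep (h : gen S k -> int) :=
  exists l : seq (int * I), inN Lam a (fun g => h g - comb bas l g).

Lemma inN_ext f f' : inN Lam a f -> (forall g, f g = f' g) -> inN Lam a f'.
Proof. by move=> H E; have <- : f = f' by apply: functional_extensionality. Qed.

Lemma inN_zero : inN Lam a (fun _ => 0).
Proof. by exists [::]; apply: functional_extensionality => g; rewrite big_nil. Qed.

Lemma inN_add f1 f2 : inN Lam a f1 -> inN Lam a f2 -> inN Lam a (fun g => f1 g + f2 g).
Proof.
move=> [l1 ->] [l2 ->]; exists (l1 ++ l2); apply: functional_extensionality => g.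
by rewrite big_cat.
Qed.

Lemma inN_scale c f : inN Lam a f -> inN Lam a (fun g => c * f g).
Proof.
move=> [l ->]; exists (map (fun p => (c * p.1, p.2)) l); apply: functional_extensionality => g.
rewrite big_map mulr_sumr; apply: eq_bigr => p _ /=; by rewrite mulrA.
Qed.

Lemma inN_rel eta n : Lam eta -> inN Lam a (relator a eta n).
Proof.
move=> H; exists [:: (1, (exist _ eta H, n))]; apply: functional_extensionality => g.
by rewrite big_seq1 mul1r.
Qed.

Lemma comb_cat l1 l2 g : comb bas (l1 ++ l2) g = comb bas l1 g + comb bas l2 g.
Proof. by rewrite /comb big_cat. Qed.

Lemma comb_scale c l g : comb bas (map (fun p => (c * p.1, p.2)) l) g = c * comb bas l g.
Proof. rewrite /comb big_map mulr_sumr; apply: eq_bigr => p _ /=; by rewrite mulrA. Qed.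

Lemma rep_ext h h' : rep h -> (forall g, h g = h' g) -> rep h'.
Proof. by move=> H E; have <- : h = h' by apply: functional_extensionality. Qed.

Lemma rep_inN h : inN Lam a h -> rep h.
Proof.
move=> H; exists [::]; apply: (inN_ext H) => g.
by rewrite /comb big_nil subr0.
Qed.

Lemma rep_zero : rep (fun _ => 0).
Proof. exact: rep_inN inN_zero. Qed.

Lemma rep_add h1 h2 : rep h1 -> rep h2 -> rep (fun g => h1 g + h2 g).
Proof.
move=> [l1 H1] [l2 H2]; exists (l1 ++ l2); apply: (inN_ext (inN_add H1 H2)) => g.
rewrite comb_cat; lia.
Qed.

Lemma rep_scale c h : rep h -> rep (fun g => c * h g).
Proof.
move=> [l H]; exists (map (fun p => (c * p.1, p.2)) l); apply: (inN_ext (inN_scale c H)) => g.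
by rewrite comb_scale mulrBr.
Qed.

Lemma rep_sub h1 h2 : rep h1 -> rep h2 -> rep (fun g => h1 g - h2 g).
Proof.
move=> H1 H2; apply: (rep_ext (rep_add H1 (rep_scale (-1) H2))) => g.
by rewrite mulN1r.
Qed.

Lemma rep_basic x : basic x -> rep (ee x).
Proof.
move=> Hx; exists [:: (1, exist _ x Hx)]; apply: (inN_ext inN_zero) => g.
by rewrite /comb big_seq1 mul1r /bas /= subrr.
Qed.

Lemma rep_sum (J : Type) (r : seq J) (P : pred J) (F : J -> gen S k -> int) :
  (forall j, P j -> rep (F j)) -> rep (fun g => \sum_(j <- r | P j) F j g).
Proof.
move=> HF; elim: r => [|j r IH].
  by apply: (rep_ext rep_zero) => g; rewrite big_nil.
case: (boolP (P j)) => Hj.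
  by apply: (rep_ext (rep_add (HF j Hj) IH)) => g; rewrite big_cons Hj.
by apply: (rep_ext IH) => g; rewrite big_cons (negbTE Hj).
Qed.

Lemma relE eta n g : relator a eta n g =
  (n`!)%:Z * ee (Gy eta n.+1) g - ee (Gy eta n) g - a eta n * ee Gz g
  - \sum_(m < k.+1) ee (Gx (restr eta m n)) g.
Proof. by []. Qed.

Lemma gen_rep eta : Lam eta ->
  (forall m n, rep (ee (Gx (restr eta m n)))) /\ (forall n, rep (ee (Gy eta n))).
Proof.
case: HW => _ [_ [_ wf]].
elim: (wf eta) => {}eta _ IH He.
have Xo : forall m n, ~ (m = mw eta /\ (nw eta <= n)%N) -> rep (ee (Gx (restr eta m n))).
  move=> m n Hmn.
  case: (classic (elim_ (restr eta m n))) => [[g [Hg [n'' [Hn E]]]]|Ne].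
    case: (elim_le He Hg Hn E) => [Eg|Hlt].
      subst g; have [Em En] := R1 E; subst; by case: Hmn.
    have [IHx _] := IH g (conj Hg (conj He Hlt)) Hg.
    by rewrite E; apply: IHx.
  apply: rep_basic; split=> //; by exists eta, m, n.
have Hz : rep (ee Gz) by apply: rep_basic.
have Xsum : forall n, rep (ee (Gy eta n.+1)) -> rep (ee (Gy eta n)) ->
    rep (fun g => \sum_(m < k.+1) ee (Gx (restr eta m n)) g).
  move=> n H1 H0.
  have := rep_sub (rep_sub (rep_sub (rep_scale (n`!)%:Z H1) H0) (rep_scale (a eta n) Hz))
    (rep_inN (inN_rel n He)).
  by move=> HH; apply: (rep_ext HH) => g; rewrite relE; lia.
have Xm : forall n, (nw eta <= n)%N -> rep (ee (Gx (restr eta (mw eta) n))).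
  move=> n Hn.
  have Hy : forall n', (nw eta <= n')%N -> rep (ee (Gy eta n')).
    by move=> n' Hn'; apply: rep_basic.
  have T1 := Xsum n (Hy _ (leqW Hn)) (Hy _ Hn).
  have T2 : rep (fun g => \sum_(m < k.+1 | m != mw eta) ee (Gx (restr eta m n)) g).
    apply: rep_sum => m Hm; apply: Xo => -[E _]; by rewrite E eqxx in Hm.
  apply: (rep_ext (rep_sub T1 T2)) => g.
  by rewrite (bigD1 (mw eta)) //= addrK.
have Xall : forall m n, rep (ee (Gx (restr eta m n))).
  move=> m n; case: (classic (m = mw eta /\ (nw eta <= n)%N)) => [[-> Hn]|H].
    exact: Xm.
  exact: Xo.
split=> //.
suff Hy : forall i n, (n + i)%N = nw eta -> rep (ee (Gy eta n)).
  move=> n; case: (leqP (nw eta) n) => Hn; first by apply: rep_basic.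
  apply: (Hy (nw eta - n)%N); lia.
elim=> [|i IHi] n Hn.
  by apply: rep_basic; split=> //; rewrite -Hn addn0.
have H1 : rep (ee (Gy eta n.+1)) by apply: IHi; rewrite -Hn; lia.
have Hs : rep (fun g => \sum_(m < k.+1) ee (Gx (restr eta m n)) g).
  by apply: (@rep_sum _ (index_enum 'I_k.+1) predT) => m _; apply: Xall.
have := rep_sub (rep_sub (rep_sub (rep_scale (n`!)%:Z H1) (rep_scale (a eta n) Hz)) Hs)
    (rep_inN (inN_rel n He)).
by move=> HH; apply: (rep_ext HH) => g; rewrite relE; lia.
Qed.

Lemma all_valid x : valid_gen Lam x -> rep (ee x).
Proof.
case: x => [|nu|eta n] /=.
- by move=> _; apply: rep_basic.
- by move=> [eta [m [n [He ->]]]]; case: (gen_rep He) => H _; apply: H.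
- by move=> He; case: (gen_rep He) => _ H; apply: H.
Qed.

Lemma rep_elemF f : elemF Lam f -> rep f.
Proof.
move=> [[s Hs] Hv]; elim: s f Hs Hv => [|x s IH] f Hs Hv.
  apply: (rep_ext rep_zero) => g; case: (eqVneq (f g) 0) => [->//|H].
  by case: (Hs g); apply/eqP.
pose f' g := if cdec (g = x) then 0 else f g.
have Hf' : rep f'.
  have S1 : forall g, f' g <> 0 -> List.In g s.
    move=> g; rewrite /f'; case: (classic (g = x)) => [Eg|Ng].
      by rewrite (cdecT Eg).
    rewrite (cdecF Ng) => H; case: (Hs g H) => [E|//]; by case: Ng.
  have S2 : forall g, f' g <> 0 -> valid_gen Lam g.
    move=> g; rewrite /f'; case: (classic (g = x)) => [Eg|Ng].
      by rewrite (cdecT Eg).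
    by rewrite (cdecF Ng); apply: Hv.
  exact: IH S1 S2.
have Hx : rep (fun g => f x * ee x g).
  case: (eqVneq (f x) 0) => [E|N].
    by apply: (rep_ext rep_zero) => g; rewrite E mul0r.
  by apply: rep_scale; apply: all_valid; apply: Hv; apply/eqP.
apply: (rep_ext (rep_add Hx Hf')) => g; rewrite /f' /ee.
case: (classic (g = x)) => [Eg|Ng].
  by rewrite (cdecT Eg) (indT Eg) mulr1 addr0 Eg.
by rewrite (cdecF Ng) (indF Ng) mulr0 add0r.
Qed.

Definition Hs (l : seq (int * ({eta : ktuple S k | Lam eta} * nat))) (g : gen S k) :=
  \sum_(p <- l) p.1 * relator a (proj1_sig p.2.1) p.2.2 g.

Lemma sum_eq_In (T : Type) (l : seq T) (F G : T -> int) :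
  (forall p, List.In p l -> F p = G p) -> \sum_(p <- l) F p = \sum_(p <- l) G p.
Proof.
elim: l => [|x l IH] H; first by rewrite !big_nil.
rewrite !big_cons H; last by left.
by rewrite IH // => p Hp; apply: H; right.
Qed.

Lemma has_In (T : Type) (a0 : pred T) (l : seq T) x : List.In x l -> a0 x -> has a0 l.
Proof.
elim: l => [//|y l IH] /= [<-|Hx] Ha; first by rewrite Ha.
by rewrite IH ?orbT.
Qed.

Lemma relGy eta n E n0 : relator a eta n (Gy E n0) =
  (n`!)%:Z * ind (eta = E /\ n.+1 = n0) - ind (eta = E /\ n = n0).
Proof.
rewrite relE /ee (@indF (Gy E n0 = Gz)) // mulr0 subr0.
rewrite big1 ?subr0; last by move=> m _; apply: indF.
congr (_ * _ - _); apply: ind_iff; split.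
- by case=> -> ->.
- by case=> -> ->.
- by case=> -> ->.
- by case=> -> ->.
Qed.

Lemma relGx eta n E n0 : Lam E -> Lam eta -> (eta = E \/ lt eta E) -> (nw E <= n0)%N ->
  relator a eta n (Gx (restr E (mw E) n0)) = - ind (eta = E /\ n = n0).
Proof.
move=> HE He Hle Hn.
rewrite relE /ee (@indF (Gx _ = Gz)) // mulr0 subr0.
rewrite (@indF (Gx _ = Gy _ _)) // (@indF (Gx _ = Gy _ _)) // mulr0 subr0 sub0r.
congr (- _).
case: (classic (eta = E /\ n = n0)) => [[Ee En]|Ne].
  subst; rewrite (indT (conj erefl erefl)) (bigD1 (mw E)) //= indT // big1 ?addr0 //.
  move=> m Hm; apply: indF => -[/R1 [Em _]]; by rewrite Em eqxx in Hm.
rewrite (indF Ne) big1 // => m _; apply: indF => -[E1].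
have [Em En] := R1 E1; subst m n0.
case: Hle => [Ee|Hlt]; first by apply: Ne.
by apply: (witE HE He Hlt); apply: R2 (esym E1) Hn.
Qed.

Lemma vanish N : forall l, (size l < N)%N -> (forall g, ~ basic g -> Hs l g = 0) ->
  forall g, Hs l g = 0.
Proof.
elim: N => [//|N IHN] l Hl Hv.
case: l Hl Hv => [|p1 l1] Hl Hv; first by move=> g; rewrite /Hs big_nil.
set l := p1 :: l1 in Hl Hv *.
have Hlam : forall x, List.In x l -> Lam (proj1_sig x.2.1) by move=> x _; apply: proj2_sig.
have Hnn : l <> [::] by [].
have [p0 [In0 Max]] := @list_max _ Lam lt _ (fun p => proj1_sig p.2.1) l HW Hnn Hlam.
set E := proj1_sig p0.2.1 in Max.
have HE : Lam E by apply: proj2_sig.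
pose D n := \sum_(p <- l) p.1 * ind (proj1_sig p.2.1 = E /\ p.2.2 = n).
have Dz : forall n, D n = 0.
  apply: NNPP => /not_all_ex_not Hex.
  have Hex' : exists n, D n != 0 by case: Hex => n Hn; exists n; apply/eqP.
  case: (ex_minnP Hex') => n0 /eqP Dn0 Min.
  case: (ltnP n0 (nw E)) => Hn0.
  - suff HH : D n0 = 0 by apply: Dn0.
    apply/eqP; rewrite -oppr_eq0; apply/eqP.
    have Hg : ~ basic (Gy E n0) by case=> _; rewrite leqNgt Hn0.
    rewrite -(Hv _ Hg) /Hs.
    under eq_bigr => p _ do rewrite relGy mulrBr.
    rewrite big_split /= sumrN.
    suff -> : \sum_(p <- l) p.1 * ((p.2.2)`!%:Z * ind (proj1_sig p.2.1 = E /\ (p.2.2).+1 = n0)) = 0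
      by rewrite add0r.
    case: n0 Dn0 Min Hn0 Hg => [|n1] Dn0 Min Hn0 Hg.
      by rewrite big1 // => p _; rewrite indF ?mulr0 // => -[].
    have D1 : D n1 = 0.
      by apply/eqP; apply: contraT => H; have := Min _ H; rewrite ltnn.
    transitivity ((n1`!)%:Z * D n1); last by rewrite D1 mulr0.
    rewrite /D mulr_sumr; apply: eq_bigr => p _.
    case: (classic (proj1_sig p.2.1 = E /\ p.2.2 = n1)) => [[Ep En]|Np].
      by rewrite !indT ?En //; lia.
    rewrite !indF ?mulr0 // => -[Ep En]; apply: Np; split=> //; lia.
  - suff HH : D n0 = 0 by apply: Dn0.
    apply/eqP; rewrite -oppr_eq0; apply/eqP.
    have Hg : ~ basic (Gx (restr E (mw E) n0)).
      by case=> _; apply; exists E; split=> //; exists n0.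
    rewrite -(Hv _ Hg) /Hs /D -sumrN.
    apply: sum_eq_In => p Hp; rewrite relGx //.
    - by rewrite mulrN.
    - exact: proj2_sig.
    - exact: Max p Hp.
set n1 := p0.2.2.
pose a0 := fun p : int * ({eta : ktuple S k | Lam eta} * nat) =>
  ~~ cdec (proj1_sig p.2.1 = E /\ p.2.2 = n1).
have Heq : forall g, Hs l g = Hs (filter a0 l) g.
  move=> g; rewrite /Hs big_filter (bigID a0) /=.
  suff -> : \sum_(p <- l | ~~ a0 p) p.1 * relator a (proj1_sig p.2.1) p.2.2 g = 0
    by rewrite addr0.
  have -> : \sum_(p <- l | ~~ a0 p) p.1 * relator a (proj1_sig p.2.1) p.2.2 g =
            \sum_(p <- l | ~~ a0 p) p.1 * relator a E n1 g.
    apply: eq_bigr => p; rewrite /a0 negbK => /cdecP [-> ->] //.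
  rewrite -mulr_suml.
  have -> : \sum_(p <- l | ~~ a0 p) p.1 = D n1.
    rewrite /D big_mkcond; apply: eq_bigr => p _; rewrite /a0 negbK.
    case: (classic (proj1_sig p.2.1 = E /\ p.2.2 = n1)) => H.
      by rewrite cdecT // indT // mulr1.
    by rewrite cdecF // indF // mulr0.
  by rewrite Dz mul0r.
have Hsz : (size (filter a0 l) < N)%N.
  rewrite size_filter; move: Hl.
  have := count_predC a0 l; have : has (predC a0) l.
    apply: (has_In In0); rewrite /= /a0 negbK; exact: cdecT.
  rewrite has_count; lia.
move=> g; rewrite Heq; apply: IHN => // g' Hg'; rewrite -Heq; exact: Hv.
Qed.

Lemma sig_eq (T : Type) (P : T -> Prop) (u v : {x | P x}) :
  proj1_sig u = proj1_sig v -> u = v.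
Proof.
case: u => x hx; case: v => y hy /= E; subst.
by rewrite (proof_irrelevance _ hx hy).
Qed.

Lemma Gx_free_main : Gx_free Lam a.
Proof.
exists I, bas; split; [|split].
- move=> [x Hx]; split.
    by exists [:: x] => g; rewrite /bas /ee /=; case: (classic (g = x)) => [->|N];
      [left|rewrite indF].
  move=> g; rewrite /bas /ee /=; case: (classic (g = x)) => [->|N]; last by rewrite indF.
  by move: Hx; case: x => //= [nu [] | eta n []].
- by move=> f Hf; apply: rep_elemF.
- move=> l [l' El'] i.
  have Hv : forall g, ~ basic g -> Hs l' g = 0.
    move=> g Hg; rewrite /Hs -(congr1 (fun F => F g) El') /comb big1 // => p _.
    by rewrite /bas /ee indF ?mulr0 // => E; apply: Hg; rewrite E; apply: proj2_sig.
  have := vanish (ltnSn (size l')) Hv (proj1_sig i).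
  rewrite /Hs -(congr1 (fun F => F (proj1_sig i)) El') /comb /bas /ee => H0.
  apply: (etrans _ H0); apply: eq_bigr => p _; congr (_ * _); apply: ind_iff; split.
    by move=> ->.
  by move=> E; apply: sig_eq; rewrite E.
Qed.

End Part2.

Theorem claim1p13 :
  (forall (k : nat) (Sy : Type) (Lam : ktuple Sy k -> Prop),
      aleph_free k.+1 Lam) /\
  (forall (k : nat) (Sy : Type) (Lam : ktuple Sy k -> Prop)
          (a : ktuple Sy k -> nat -> int),
      comb_free Lam -> Gx_free Lam a).
Proof.
split; first exact: part1.
move=> k Sy Lam a [lt [HW Hwit]]; exact: (@Gx_free_main Sy k Lam a lt HW Hwit).
Qed.
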